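(* Let $L_i,L_j$ be two of four general lines in $\mathbb P^2$, $P=L_i\cap L_j$, and let $f\colon Y\to\mathbb P^2$ be a composition of blowups at points of intersection of visible curves. Let $E,E'$ be two exceptional visible curves over $P$ with weights $(w_i,w_j)$ and $(w'_i,w'_j)$ (coefficients in $f^*L_i,f^*L_j$) such that $w_j/w_i<w'_j/w'_i$, and let $\Gamma$ be the chain of visible curves lying strictly between $E$ and $E'$ in the chain of visible curves over $P$, marked by $-C^2$. Then $$\det\Gamma=\begin{vmatrix}w_i&w_j\\ w'_i&w'_j\end{vmatrix}=\Big(\frac{w_i}{w_j}-\frac{w'_i}{w'_j}\Big)w_jw'_j.$$
   Context: Visible curves are the strict transforms of the lines and of all exceptional curves of the blowups; each blowup in $f$ is centered at an intersection point of two visible curves. The visible curves over $P$ together with the strict transforms of $L_i,L_j$ form a chain. The determinant of a chain with marks $a_1,\dots,a_k$ is the determinant of the tridiagonal matrix with diagonal $a_l$ and off-diagonal entries $-1$; the empty chain has determinant $1$. *)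

(* Defs.v *)
From mathcomp Require Import all_boot all_algebra.
Set Implicit Arguments. Unset Strict Implicit. Unset Printing Implicit Defensive.
Import GRing.Theory Num.Theory.
Local Open Scope ring_scope.

(* A visible curve in the chain over P = L_i \cap L_j :
   its mark  -C^2  and its weights (w_i, w_j) = (coeff in f^*L_i, coeff in f^*L_j). *)
Record vcurve := VC { vmark : int; vwt : nat * nat }.

(* Initial chain over P on P^2: the lines L_i, L_j themselves
   (L^2 = 1, so mark -1; weights (1,0) and (0,1)). *)
Definition chain0 : seq vcurve := [:: VC (-1) (1, 0)%N; VC (-1) (0, 1)%N].

Definition dummy_vc := VC 0 (0, 0)%N.

(* Blowing up the intersection point of the k-th and (k+1)-th curves of the chain:
   a new (-1)-curve with weight the sum of the neighbours' weights (pullbacks add)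
   is inserted, and each neighbour's self-intersection drops by one. *)
Definition bump (C : vcurve) : vcurve := VC (vmark C + 1) (vwt C).

Definition blowup_chain (c : seq vcurve) (k : nat) : seq vcurve :=
  let A := nth dummy_vc c k in
  let B := nth dummy_vc c k.+1 in
  take k c ++ [:: bump A; VC 1 ((vwt A).1 + (vwt B).1, (vwt A).2 + (vwt B).2)%N; bump B]
    ++ drop k.+2 c.

(* Chains over P obtainable by a composition f of blowups at intersection points
   of visible curves (blowups not over P do not change the chain over P). *)
Inductive reachable_chain : seq vcurve -> Prop :=
  | reach0 : reachable_chain chain0
  | reachS c k : reachable_chain c -> (k.+1 < size c)%N ->
      reachable_chain (blowup_chain c k).

Definition chain_det (s : seq int) : int :=
  \det (\matrix_(i < size s, j < size s)
          (if i == j then s`_i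
           else if (i.+1 == j :> nat) || (j.+1 == i :> nat) then -1 else 0)).

Definition between_marks (c : seq vcurve) (p q : nat) : seq int :=
  map vmark (drop (minn p q).+1 (take (maxn p q) c)).

(* Main.v *)
Require Import Defs.
From mathcomp Require Import all_boot all_order all_algebra zify ring.
Import Order.TTheory GRing.Theory Num.Theory.
Local Open Scope ring_scope.

Lemma nth_blow c k i : (k.+1 < size c)%N ->
  nth dummy_vc (blowup_chain c k) i =
  if (i < k)%N then nth dummy_vc c i
  else if i == k then Defs.bump (nth dummy_vc c k)
  else if i == k.+1 then VC 1 ((vwt (nth dummy_vc c k)).1 + (vwt (nth dummy_vc c k.+1)).1,
                               (vwt (nth dummy_vc c k)).2 + (vwt (nth dummy_vc c k.+1)).2)%N
  else if i == k.+2 then Defs.bump (nth dummy_vc c k.+1)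
  else nth dummy_vc c i.-1.
Proof.
move=> hk; rewrite /blowup_chain nth_cat size_take.
have -> : (k < size c)%N by lia.
case: ltnP => hik; first by rewrite nth_take.
rewrite nth_cat /=.
case: (ltngtP i k) hik => // [hki|->] _; last by rewrite subnn.
have : (0 < i - k)%N by lia.
case E: (i - k)%N => [|[|[|j]]] // _.
- have -> : i = k.+1 by lia. by rewrite eqxx.
- have -> : i = k.+2 by lia. by rewrite eqxx (gtn_eqF (ltnSn _)).
- rewrite nth_drop. have h1 : i != k.+1 by lia. have h2 : i != k.+2 by lia.
  rewrite (negbTE h1) (negbTE h2). congr nth. lia.
Qed.

Definition X c i : int := ((vwt (nth dummy_vc c i)).1)%:Z.
Definition Y c i : int := ((vwt (nth dummy_vc c i)).2)%:Z.
Definition M c i : int := vmark (nth dummy_vc c i).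
Definition Inv c := (1 < size c)%N /\
  (forall i, (i.+1 < size c)%N -> X c i * Y c i.+1 - Y c i * X c i.+1 = 1) /\
  (forall i, (i.+2 < size c)%N -> M c i.+1 * X c i.+1 = X c i + X c i.+2 /\
                                  M c i.+1 * Y c i.+1 = Y c i + Y c i.+2).

Ltac simpif := repeat match goal with |- context[if ?b then _ else _] =>
  first [have -> : b = true by lia | have -> : b = false by lia] end.

Lemma size_blow c k : (k.+1 < size c)%N -> size (blowup_chain c k) = (size c).+1.
Proof. move=> hk; rewrite /blowup_chain !size_cat size_take size_drop /=.
have -> : (k < size c)%N by lia. lia. Qed.

Lemma XB c k i : (k.+1 < size c)%N -> X (blowup_chain c k) i =
  if (i <= k)%N then X c i else if i == k.+1 then X c k + X c k.+1 else X c i.-1.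
Proof. move=> hk; rewrite /X nth_blow //.
case: (ltngtP i k) => h; simpif => //; try (subst; by simpif).
case: (ltngtP i k.+2) => h2; simpif => //; try (subst; by simpif).
Qed.

Lemma YB c k i : (k.+1 < size c)%N -> Y (blowup_chain c k) i =
  if (i <= k)%N then Y c i else if i == k.+1 then Y c k + Y c k.+1 else Y c i.-1.
Proof. move=> hk; rewrite /Y nth_blow //.
case: (ltngtP i k) => h; simpif => //; try (subst; by simpif).
case: (ltngtP i k.+2) => h2; simpif => //; try (subst; by simpif).
Qed.

Lemma MB c k i : (k.+1 < size c)%N -> M (blowup_chain c k) i =
  if (i < k)%N then M c i else if i == k then M c k + 1 else if i == k.+1 then 1
  else if i == k.+2 then M c k.+1 + 1 else M c i.-1.
Proof. move=> hk; rewrite /M nth_blow //.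
case: (ltngtP i k) => h; simpif => //; try (subst; by simpif).
case: (ltngtP i k.+2) => h2; simpif => //; try (subst; by simpif).
Qed.

Lemma Inv_blow c k : Inv c -> (k.+1 < size c)%N -> Inv (blowup_chain c k).
Proof.
move=> [h0 [h1 h2]] hk; rewrite /Inv size_blow //; split; first lia.
split.
- move=> i hi; rewrite !XB // !YB //.
  case: (ltnP i.+1 k.+1) => hik.
  + simpif. apply: h1; lia.
  case: (ltngtP i k) => e; [lia| |].
  + case: (ltngtP i k.+1) => e2; [lia| |].
    * case: i e e2 hi hik => [|j] e e2 hi hik; first lia.
      simpif => /=. apply: h1; lia.
    * subst i; simpif. have h := h1 k hk. rewrite -h; ring.
  + subst i; simpif. have h := h1 k hk. rewrite -h; ring.
- move=> i hi; rewrite !XB // !YB // !MB //.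
  case: (ltnP i.+2 k.+1) => hik.
  + simpif. apply: h2; lia.
  case: (ltngtP i.+1 k) => e; [lia| |].
  + case: (ltngtP i k) => e2; [lia| |].
    * case: (ltngtP i k.+1) => e3.
      -- lia.
      -- case: i e e2 e3 hi hik => [|j] e e2 e3 hi hik; first lia.
         simpif => /=. apply: h2; lia.
      -- subst i; simpif. have [ha hb] := h2 k ltac:(lia). split.
         ++ rewrite mulrDl ha; ring.
         ++ rewrite mulrDl hb; ring.
    * subst i; simpif. split; ring.
  + rewrite -e; simpif. have [ha hb] := h2 i ltac:(lia). rewrite e.
    rewrite e in ha hb. split.
    ++ rewrite mulrDl ha; ring.
    ++ rewrite mulrDl hb; ring.
Qed.

Lemma Inv_reach c : reachable_chain c -> Inv c.
Proof.
elim => [|c' k _ IH hk]; last exact: Inv_blow.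
rewrite /Inv /=; split => //; split.
- case => [|i] //= _; rewrite /X /Y /=; done.
- by [].
Qed.
Definition E (s : seq int) (i j : nat) : int :=
  if i == j then s`_i else if (i.+1 == j) || (j.+1 == i) then -1 else 0.

Lemma chain_detE s : chain_det s = \det (\matrix_(i < size s, j < size s) E s i j).
Proof. by []. Qed.

Lemma chain_det0 : chain_det [::] = 1.
Proof. by rewrite /chain_det det_mx00. Qed.

Lemma chain_det1 x : chain_det [:: x] = x.
Proof. by rewrite /chain_det det_mx11 mxE. Qed.

Definition mat (s : seq int) := \matrix_(i < size s, j < size s) E s i j.
Lemma matE s i j : mat s i j = E s i j.
Proof. by rewrite mxE. Qed.

Lemma mat_minor x s : row' ord0 (col' ord0 (mat (x :: s))) = mat s.
Proof. by apply/matrixP => a b; rewrite !mxE /E /=. Qed.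

Lemma det_minor01 x y s :
  \det (row' ord0 (col' (lift ord0 ord0) (mat [:: x, y & s]))) = - \det (mat s).
Proof.
rewrite (expand_det_col _ ord0) big_ord_recl big1; last first.
  move=> i _; rewrite !mxE /E /=.

  by rewrite mul0r.
rewrite addr0 !mxE /E /= /cofactor /= expr0 mul1r.
have -> : row' ord0 (col' ord0 (row' ord0 (col' (lift ord0 ord0) (mat [:: x, y & s])))) = mat s.
  by apply/matrixP => a b; rewrite !mxE /E /=.
by rewrite mulN1r.
Qed.

Lemma det_minor00 x s : \det (row' ord0 (col' ord0 (mat (x :: s)))) = \det (mat s).
Proof. by rewrite mat_minor. Qed.

Lemma chain_det2 x y s : chain_det [:: x, y & s] = x * chain_det (y :: s) - chain_det s.
Proof.
have cd : forall s, chain_det s = \det (mat s) by [].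
rewrite !cd (expand_det_row _ ord0) !big_ord_recl big1; last first.
  by move=> j _; rewrite /mat mxE /E /= mul0r.
have e00 : mat [:: x, y & s] ord0 ord0 = x by rewrite /mat mxE.
have e01 : mat [:: x, y & s] ord0 (lift ord0 ord0) = -1 by rewrite /mat mxE.
rewrite e00 e01 addr0 /cofactor /= expr0 mul1r expr1 -(det_minor00 x (y :: s)) -(det_minor01 x y s).
ring.
Qed.

Lemma drop_take_cons (c : seq vcurve) p q : (p.+1 < q)%N -> (q <= size c)%N ->
  drop p.+1 (take q c) = nth dummy_vc c p.+1 :: drop p.+2 (take q c).
Proof.
move=> h1 h2; rewrite (drop_nth dummy_vc); last by rewrite size_take; case: ifP; lia.
by rewrite nth_take.
Qed.

Lemma keyK c : Inv c -> forall d p, (p + d.+1 < size c)%N ->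
  chain_det (map vmark (drop p.+1 (take (p + d.+1) c))) =
  X c p * Y c (p + d.+1) - Y c p * X c (p + d.+1).
Proof.
move=> [h0 [h1 h2]] d.
suff : (forall p, (p + d.+1 < size c)%N ->
  chain_det (map vmark (drop p.+1 (take (p + d.+1) c))) =
  X c p * Y c (p + d.+1) - Y c p * X c (p + d.+1)) /\
  (forall p, (p + d.+2 < size c)%N ->
  chain_det (map vmark (drop p.+1 (take (p + d.+2) c))) =
  X c p * Y c (p + d.+2) - Y c p * X c (p + d.+2)) by case.
elim: d => [|d [IH1 IH2]].
- split => p hp.
  + rewrite addn1 drop_oversize ?size_take; last by case: ifP; lia.
    by rewrite chain_det0 h1 //; lia.
  + rewrite addn2 drop_take_cons; [|lia|lia].
    rewrite drop_oversize ?size_take; last by case: ifP; lia.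
    rewrite /= chain_det1.
    have [hx hy] := h2 p ltac:(lia).
    have hd := h1 p ltac:(lia).
    have e : X c p * Y c p.+2 - Y c p * X c p.+2 =
      M c p.+1 * (X c p * Y c p.+1 - Y c p * X c p.+1)
      + X c p * (Y c p + Y c p.+2 - M c p.+1 * Y c p.+1)
      - Y c p * (X c p + X c p.+2 - M c p.+1 * X c p.+1) by ring.
    by rewrite e hd -hx -hy !subrr; rewrite /M; ring.
- split => [p hp|p hp]; first exact: IH2.
  rewrite drop_take_cons; [|lia|lia].
  rewrite (drop_take_cons c p.+1); [|lia|lia].
  rewrite map_cons map_cons chain_det2.
  rewrite -map_cons -(drop_take_cons c p.+1); [|lia|lia].
  have -> : (p + d.+3 = p.+1 + d.+2)%N by lia.
  rewrite IH2; last lia.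
  have -> : (p.+1 + d.+2 = p.+2 + d.+1)%N by lia.
  rewrite IH1; last lia.
  set q := (p.+2 + d.+1)%N.
  have [hx hy] := h2 p ltac:(lia).
  have e : X c p * Y c q - Y c p * X c q =
     M c p.+1 * (X c p.+1 * Y c q - Y c p.+1 * X c q) - (X c p.+2 * Y c q - Y c p.+2 * X c q)
     + ((X c p + X c p.+2 - M c p.+1 * X c p.+1) * Y c q
        - (Y c p + Y c p.+2 - M c p.+1 * Y c p.+1) * X c q) by ring.
  by rewrite e -hx -hy !subrr /M; ring.
Qed.

Lemma trans_pos (a b cc d e f : int) : 0 <= a -> 0 <= b -> 0 <= cc -> 0 <= d ->
  0 <= e -> 0 <= f -> 0 < a * d - b * cc -> 0 < cc * f - d * e -> 0 < a * f - b * e.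
Proof.
move=> ha hb hc hd he hf D1 D2.
have de0 : 0 <= d * e by apply: mulr_ge0.
have bc0 : 0 <= b * cc by apply: mulr_ge0.
have cpos : 0 < cc.
  rewrite lt_neqAle hc andbT; apply/eqP => c0; move: D2; rewrite -c0 mul0r sub0r oppr_gt0.
  by rewrite ltNge de0.
have dpos : 0 < d.
  rewrite lt_neqAle hd andbT; apply/eqP => d0; move: D1; rewrite -d0 mulr0 sub0r oppr_gt0.
  by rewrite ltNge bc0.
have cfpos : 0 < cc * f by lia.
have id : cc * d * (a * f - b * e) = (a * d - b * cc) * (cc * f) + (cc * f - d * e) * (b * cc) by ring.
have : 0 < cc * d * (a * f - b * e).
  have P := mulr_gt0 D1 cfpos.
  have Q : 0 <= (cc * f - d * e) * (b * cc) by apply: mulr_ge0 => //; apply: ltW.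
  rewrite id; lia.
by rewrite pmulr_rgt0 // mulr_gt0.
Qed.

Lemma mono c : Inv c -> forall k l, (k < l)%N -> (l < size c)%N ->
  0 < X c k * Y c l - Y c k * X c l.
Proof.
move=> [h0 [h1 h2]] k; elim => [//|l IH] hkl hl.
have [hkl'|ekl] : (k < l)%N \/ k = l by lia.
2: by subst; rewrite h1.
apply: (trans_pos (X c k) (Y c k) (X c l) (Y c l) (X c l.+1) (Y c l.+1)) => //.
- apply: IH => //; lia.
- by rewrite h1.
Qed.

Theorem lemma3p11 (c : seq vcurve) (p q : nat) :
  reachable_chain c ->
  (0 < p)%N -> (p < (size c).-1)%N ->
  (0 < q)%N -> (q < (size c).-1)%N ->
  let w := vwt (nth dummy_vc c p) in
  let w' := vwt (nth dummy_vc c q) in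
  (w.2 * w'.1 < w'.2 * w.1)%N ->
  chain_det (between_marks c p q) = (w.1%:Z * w'.2%:Z - w.2%:Z * w'.1%:Z).
Proof.
move=> hr hp0 hp hq0 hq w w' hw.
have I := Inv_reach c hr.
have hw' : Y c p * X c q < Y c q * X c p.
  by rewrite /X /Y -!PoszM ltz_nat.
have hpq : (p < q)%N.
  case: (ltngtP p q) => // h.
  - have := mono c I q p h ltac:(lia). move: hw'; rewrite [Y c p * _]mulrC [Y c q * _]mulrC. lia.
  - subst q. lia.
rewrite /between_marks.
have -> : minn p q = p by lia.
have -> : maxn p q = (p + (q - p - 1).+1)%N by lia.
rewrite (keyK c I); last lia.
have -> : (p + (q - p - 1).+1)%N = q by lia.
done.
Qed.
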